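(* Let $(F,t)\in U$, $Y=Y_{F,t}$, and $p_1,p_2\in C_i$ ($i\in\{1,2\}$). Let $l_{p_1p_2}$ be the residual line of $\overline{p_0p_1}+\overline{p_0p_2}$, i.e. the line with $Y\cap P=\overline{p_0p_1}+\overline{p_0p_2}+l_{p_1p_2}$, where $P$ is the plane spanned by $p_0,p_1,p_2$ (when $p_1=p_2$, $P$ is the tangent plane of the cone $\hat C_i$ along $\overline{p_0p_1}$). Then $l_{p_1p_2}=\overline{p_0p_3}$, where $p_3$ is the third intersection point of the line $\overline{p_1p_2}$ with $C_i$. In particular $l_{p_1p_2}\in\Gamma_i$.
   Context: $U=U_0\times\mathbb{A}^1$, where $U_0$ is the space of cubic forms $F(x_0,\dots,x_3)$ such that the curve cut out by $F$ on the quadric $x_0x_3=x_1x_2$ in $\mathbb{P}^3$ is smooth, avoids $[0,0,0,1]$, and is tangent with multiplicity $2$ to the lines $x_0=x_1=0$ and $x_0=x_2=0$. $Y_{F,t}\subset\mathbb{P}^5$ is $x_4^3-F(x_0,\dots,x_3)+x_5(x_0x_3-x_1x_2)+t\,x_0x_5^2=0$. $p_0=[0,\dots,0,1]$. $C_i=(x_0=x_i=x_5=0)\cap(x_4^3=F)$ is a plane cubic, $\hat C_i\subset Y$ the cone over $C_i$ with vertex $p_0$, and $\Gamma_i\subset F(Y)$ the image of $C_i\to F(Y)$, $p\mapsto\overline{p_0p}$. *)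

(* Defs.v *)
From HB Require Import structures.
From mathcomp Require Import all_boot all_order all_algebra.
From mathcomp Require Import mpoly.
Set Implicit Arguments. Unset Strict Implicit. Unset Printing Implicit Defensive.
Import Order.TTheory GRing.Theory.
Local Open Scope ring_scope.

Section Defs.
Variable k : closedFieldType.

(* homogeneous coordinates x_0,...,x_5 of P^5 (resp. x_0..x_3 of P^3) *)
Definition vec := 'I_6 -> k.
Definition o6 (n : nat) : 'I_6 := inord n.
Definition vec4 (a b c d : k) : 'I_4 -> k := fun j => nth 0 [:: a; b; c; d] j.
Definition restr4 (x : vec) : 'I_4 -> k := fun j => x (widen_ord (isT : (4 <= 6)%N) j).

Definition Qd (x : 'I_4 -> k) : k := x 0 * x 3 - x 1 * x 2.
Definition gradQ (x : 'I_4 -> k) : 'I_4 -> k :=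
  fun j => nth 0 [:: x 3; - x 2; - x 1; x 0] j.
Definition gradF (F : {mpoly k[4]}) (x : 'I_4 -> k) : 'I_4 -> k :=
  fun j => (mderiv j F).@[x].

(* the curve Q = F = 0 in P^3 is smooth (Jacobian criterion for the
   complete intersection) *)
Definition smooth_on_quadric (F : {mpoly k[4]}) : Prop :=
  forall x : 'I_4 -> k, (exists j, x j != 0) -> Qd x = 0 -> F.@[x] = 0 ->
    forall a b : k, (forall j, a * gradQ x j + b * gradF F x j = 0) ->
      a = 0 /\ b = 0.

Definition double_root (f : k -> k -> k) : Prop :=
  exists l1 l2 m1 m2 : k, l1 * m2 - l2 * m1 != 0 /\
    forall a b, f a b = (l1 * a + l2 * b) ^+ 2 * (m1 * a + m2 * b).

Definition U0 (F : {mpoly k[4]}) : Prop :=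
  [/\ F \is 3.-homog,
      smooth_on_quadric F,
      F.@[vec4 0 0 0 1] != 0,
      (* tangent with multiplicity 2 to the line x0 = x1 = 0 *)
      double_root (fun a b => F.@[vec4 0 0 a b])
    & (* tangent with multiplicity 2 to the line x0 = x2 = 0 *)
      double_root (fun a b => F.@[vec4 0 a 0 b])].

Definition Phi (F : {mpoly k[4]}) (t : k) (x : vec) : k :=
  x (o6 4) ^+ 3 - F.@[restr4 x]
  + x (o6 5) * (x (o6 0) * x (o6 3) - x (o6 1) * x (o6 2))
  + t * x (o6 0) * x (o6 5) ^+ 2.

(* x_4^3 - F: equation of C_i in the plane x0 = xi = x5 = 0, and of the
   cone \hat C_i in the 3-space x0 = xi = 0 *)
Definition gcone (F : {mpoly k[4]}) (x : vec) : k :=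
  x (o6 4) ^+ 3 - F.@[restr4 x].

Definition grad_g (F : {mpoly k[4]}) (x : vec) : vec :=
  fun j => if (val j < 4)%N then - (mderiv (@inord 3 j) F).@[restr4 x]
           else if val j == 4%N then 3%:R * x (o6 4) ^+ 2 else 0.

Definition p0 : vec := fun j => if val j == 5%N then 1 else 0.

Definition lf (a x : vec) : k := \sum_j a j * x j.
Definition nonzero (p : vec) : Prop := exists j, p j != 0.
Definition proj_eq (p q : vec) : Prop :=
  exists c : k, c != 0 /\ forall j, q j = c * p j.
Definition indep2 (q q' : vec) : Prop :=
  forall a b : k, (forall j, a * q j + b * q' j = 0) -> a = 0 /\ b = 0.
Definition span1 (a : vec) : vec -> Prop :=
  fun x => exists s, forall j, x j = s * a j.
Definition span2 (a b : vec) : vec -> Prop :=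
  fun x => exists s u, forall j, x j = s * a j + u * b j.
Definition span3 (a b c : vec) : vec -> Prop :=
  fun x => exists s u v, forall j, x j = s * a j + u * b j + v * c j.

Definition divcomp (S Z : vec -> Prop) (l : vec) : Prop :=
  (forall x, Z x -> S x /\ lf l x = 0) /\ (exists x, S x /\ lf l x != 0).

(* the divisor cut by the cubic form g on (the projectivisation of) the
   linear subspace S is Z1 + Z2 + Z3 (each Z_m a hyperplane of S) *)
Definition cuts3 (g : vec -> k) (S Z1 Z2 Z3 : vec -> Prop) : Prop :=
  exists l1 l2 l3 : vec,
    [/\ forall x, S x -> g x = lf l1 x * lf l2 x * lf l3 x,
        divcomp S Z1 l1, divcomp S Z2 l2 & divcomp S Z3 l3].

Definition Cpt (F : {mpoly k[4]}) (i : 'I_6) (p : vec) : Prop :=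
  [/\ nonzero p, p (o6 0) = 0, p i = 0, p (o6 5) = 0 & gcone F p = 0].

(* tangent plane of the cone \hat C_i (in the 3-space x0 = xi = 0)
   along the line p0 p1 *)
Definition tangent_plane F (i : 'I_6) (p1 : vec) : vec -> Prop :=
  fun x => [/\ x (o6 0) = 0, x i = 0 & lf (grad_g F p1) x = 0].
Definition tangent_line F (i : 'I_6) (p1 : vec) : vec -> Prop :=
  fun x => [/\ x (o6 0) = 0, x i = 0, x (o6 5) = 0 & lf (grad_g F p1) x = 0].

Definition planeP F i (p1 p2 : vec) : vec -> Prop :=
  fun x => (proj_eq p1 p2 -> tangent_plane F i p1 x) /\
           (~ proj_eq p1 p2 -> span3 p0 p1 p2 x).
Definition lineL F i (p1 p2 : vec) : vec -> Prop :=
  fun x => (proj_eq p1 p2 -> tangent_line F i p1 x) /\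
           (~ proj_eq p1 p2 -> span2 p1 p2 x).

Definition third_point F i (p1 p2 p3 : vec) : Prop :=
  nonzero p3 /\ cuts3 (gcone F) (lineL F i p1 p2) (span1 p1) (span1 p2) (span1 p3).

Definition residual_line F t i (p1 p2 q q' : vec) : Prop :=
  indep2 q q' /\
  cuts3 (Phi F t) (planeP F i p1 p2) (span2 p0 p1) (span2 p0 p2) (span2 q q').

End Defs.

(* Main.v *)
Require Import Defs.
From HB Require Import structures.
From mathcomp Require Import all_boot all_order all_algebra.
From mathcomp Require Import mpoly.
From mathcomp Require Import ring.
From Stdlib Require Import FunctionalExtensionality Classical.
Import GRing.Theory.
Local Open Scope ring_scope.
Set Implicit Arguments. Unset Strict Implicit. Unset Printing Implicit Defensive.

Section Basic.
Variable k : closedFieldType.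
Implicit Types (a b x y l : vec k) (u v s : k).

Definition lc u a v b : vec k := fun j => u * a j + v * b j.
Definition e6 (r : 'I_6) : vec k := fun j => if j == r then 1 else 0.
Definition kill5 x : vec k := fun j => if j == o6 5 then 0 else x j.

Lemma vext x y : (forall j, x j = y j) -> x = y.
Proof. by move=> h; apply: functional_extensionality. Qed.

Lemma lf_lc l u a v b : lf l (lc u a v b) = u * lf l a + v * lf l b.
Proof.
rewrite /lf !mulr_sumr -big_split; apply: eq_bigr => j _ /=; rewrite /lc; ring.
Qed.

Lemma lf_lcl x u a v b : lf (lc u a v b) x = u * lf a x + v * lf b x.
Proof.
rewrite /lf !mulr_sumr -big_split; apply: eq_bigr => j _ /=; rewrite /lc; ring.
Qed.

Lemma lf_e l r : lf l (e6 r) = l r.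
Proof.
rewrite /lf (bigD1 r) //= big1 => [|j /negbTE hj]; rewrite /e6 ?eqxx ?hj; ring.
Qed.

Lemma lf_el l r : lf (e6 r) l = l r.
Proof.
rewrite /lf (bigD1 r) //= big1 => [|j /negbTE hj]; rewrite /e6 ?eqxx ?hj; ring.
Qed.

Lemma o6v n : (n < 6)%N -> val (o6 n) = n.
Proof. by move=> h; apply: inordK. Qed.

Lemma lf_p0 l : lf l (@p0 k) = l (o6 5).
Proof.
rewrite /lf (bigD1 (o6 5)) //= big1 => [|j /negbTE hj].
  by rewrite /p0 o6v // eqxx; ring.
rewrite /p0; case: ifP => h; last by ring.
have hj5 : j = o6 5 by apply/val_inj; rewrite /= (eqP h) o6v.
by rewrite hj5 eqxx in hj.
Qed.

Lemma lf_kill5 l x : lf l (kill5 x) = lf (kill5 l) x.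
Proof. by apply: eq_bigr => j _; rewrite /kill5; case: ifP => _; ring. Qed.

Lemma kill5_id x : x (o6 5) = 0 -> kill5 x = x.
Proof. by move=> h; apply: vext => j; rewrite /kill5; case: eqP => // ->. Qed.

Lemma cover6 (j : 'I_6) : j = o6 0 \/ j = o6 1 \/ j = o6 2 \/ j = o6 3 \/ j = o6 4 \/ j = o6 5.
Proof.
have E n (hn : (n < 6)%N) : Ordinal hn = o6 n by apply/val_inj; rewrite o6v.
case: j => [[|[|[|[|[|[|?]]]]]] hj] //; rewrite E.
- by left.
- by right; left.
- by right; right; left.
- by right; right; right; left.
- by right; right; right; right; left.
- by right; right; right; right; right.
Qed.

Lemma eq_o6 n m : (n < 6)%N -> (m < 6)%N -> (o6 n == o6 m) = (n == m).
Proof. by move=> hn hm; rewrite -val_eqE /= !o6v. Qed.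

End Basic.
Arguments e6 {k} r.

Section Config.
Variable k : closedFieldType.
Variables i j1 : 'I_6.
Hypothesis hij : (i = o6 1 /\ j1 = o6 2) \/ (i = o6 2 /\ j1 = o6 1).
Implicit Types (a b x y l : vec k) (u v s : k).

Definition planar x := [/\ x (o6 0) = 0, x i = 0 & x (o6 5) = 0].
Definition dec3 (r s t : 'I_6) x := forall j, x j = x r * e6 r j + x s * e6 s j + x t * e6 t j.
Definition trip (r s t : 'I_6) := [/\ planar (e6 r), planar (e6 s), planar (e6 t),
  [&& r != s, r != t & s != t] & forall x, planar x -> dec3 r s t x].

Lemma trip0 : trip j1 (o6 3) (o6 4).
Proof.
rewrite /trip /planar /dec3; case: hij => [[-> ->]|[-> ->]]; split; rewrite /e6 ?eq_o6 //;
  move=> x [h0 h1 h5] j; case: (cover6 j) => [->|[->|[->|[->|[->|->]]]]];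
  rewrite ?eq_o6 //= ?h0 ?h1 ?h5; ring.
Qed.

Lemma tripA (r s t : 'I_6) : trip r s t -> trip s r t.
Proof.
case=> h1 h2 h3 /and3P[h4 h5 h6] h; split => //; first by rewrite (eq_sym s r) h4 h5 h6.
by move=> x /h hx j; rewrite hx; ring.
Qed.

Lemma tripB (r s t : 'I_6) : trip r s t -> trip r t s.
Proof.
case=> h1 h2 h3 /and3P[h4 h5 h6] h; split => //; first by rewrite (eq_sym t s) h4 h5 h6.
by move=> x /h hx j; rewrite hx; ring.
Qed.

Lemma lf_trip (r s t : 'I_6) l x : trip r s t -> planar x ->
  lf l x = l r * x r + l s * x s + l t * x t.
Proof.
case=> _ _ _ _ h /h hx.
have E : x = lc (x r) (e6 r) 1 (lc (x s) (e6 s) (x t) (e6 t)).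
  by apply: vext => j; rewrite hx /lc; ring.
by rewrite {1}E !lf_lc !lf_e; ring.
Qed.

Lemma planar_lc u a v b : planar a -> planar b -> planar (lc u a v b).
Proof. by case=> a0 a1 a5 [b0 b1 b5]; rewrite /planar /lc a0 a1 a5 b0 b1 b5; split; ring. Qed.

Lemma planar_eq (r s t : 'I_6) x y : trip r s t -> planar x -> planar y ->
  x r = y r -> x s = y s -> x t = y t -> x = y.
Proof.
case=> _ _ _ _ h /h hx /h hy er es et; apply: vext => j.
by rewrite hx hy er es et.
Qed.


Definition minor (r s : 'I_6) a b := a r * b s - a s * b r.

Lemma duals (r s t : 'I_6) a b : trip r s t -> planar a -> planar b ->
  minor r s a b != 0 ->
  exists U V : vec k, [/\ lf U a = 1, lf U b = 0, lf V a = 0, lf V b = 1 &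
    [/\ U (o6 5) = 0, V (o6 5) = 0 &
      forall g : vec k, lf g a = 0 -> lf g b = 0 -> (g r != 0 \/ g s != 0 \/ g t != 0) ->
      forall x, planar x -> lf g x = 0 -> x = lc (lf U x) a (lf V x) b]].
Proof.
move=> htr ha hb hD; set D := minor r s a b in hD.
have htr' := htr; case: htr' => hr hs ht _ _.
exists (lc (b s / D) (e6 r) (- b r / D) (e6 s)), (lc (- a s / D) (e6 r) (a r / D) (e6 s)).
rewrite !lf_lcl !lf_el; split; rewrite /D /minor; try by field.
split.
- by rewrite /lc; case: hr => _ _ ->; case: hs => _ _ ->; ring.
- by rewrite /lc; case: hr => _ _ ->; case: hs => _ _ ->; ring.
move=> g ga gb gnz x hx gx.
set y := lc _ a _ b.
have hy : planar y by apply: planar_lc.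
have yr : y r = x r by rewrite /y /lc !lf_lcl !lf_el /D /minor; field.
have ys : y s = x s by rewrite /y /lc !lf_lcl !lf_el /D /minor; field.
have gy : lf g y = 0 by rewrite /y lf_lc ga gb; ring.
rewrite (lf_trip _ htr hx) in gx; rewrite (lf_trip _ htr hy) yr ys in gy.
rewrite (lf_trip _ htr ha) in ga; rewrite (lf_trip _ htr hb) in gb.
have [gt0|gtn] := eqVneq (g t) 0.
  have e1 : g r * D = b s * (g r * a r + g s * a s + g t * a t) - a s * (g r * b r + g s * b s + g t * b t).
    by rewrite /D /minor gt0; ring.
  have e2 : g s * D = a r * (g r * b r + g s * b s + g t * b t) - b r * (g r * a r + g s * a s + g t * a t).
    by rewrite /D /minor gt0; ring.
  rewrite ga gb !mulr0 subrr in e1; rewrite ga gb !mulr0 subrr in e2.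
  move/eqP: e1; move/eqP: e2; rewrite !mulf_eq0 (negbTE hD) !orbF => /eqP e2 /eqP e1.
  by exfalso; case: gnz => [|[]]; rewrite ?e1 ?e2 ?gt0 eqxx.
apply/esym/(planar_eq htr hy hx) => //.
have : g t * (y t - x t) = (g r * x r + g s * x s + g t * y t) - (g r * x r + g s * x s + g t * x t) by ring.
rewrite gx gy subrr.
by move/eqP; rewrite mulf_eq0 (negbTE gtn) /= subr_eq0 => /eqP.
Qed.


Lemma zero_planar x : planar x -> x j1 = 0 -> x (o6 3) = 0 -> x (o6 4) = 0 ->
  forall j, x j = 0.
Proof.
move=> hx e1 e3 e4 j; case: trip0 => _ _ _ _ /(_ x hx j) ->.
by rewrite e1 e3 e4; ring.
Qed.

Lemma minor_ex a b : planar a -> planar b -> indep2 a b ->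
  [\/ minor j1 (o6 3) a b != 0, minor j1 (o6 4) a b != 0 | minor (o6 3) (o6 4) a b != 0].
Proof.
move=> ha hb hab.
case: (eqVneq (minor j1 (o6 3) a b) 0) => [m1|]; last by constructor 1.
case: (eqVneq (minor j1 (o6 4) a b) 0) => [m2|]; last by constructor 2.
case: (eqVneq (minor (o6 3) (o6 4) a b) 0) => [m3|]; last by constructor 3.
exfalso; move: m1 m2 m3; rewrite /minor => m1 m2 m3.
have hl u v : planar (lc u a v b) by apply: planar_lc.
have key u v : u * a j1 + v * b j1 = 0 -> u * a (o6 3) + v * b (o6 3) = 0 ->
    u * a (o6 4) + v * b (o6 4) = 0 -> u = 0 /\ v = 0.
  by move=> e1 e3 e4; apply: hab; apply: (zero_planar (hl u v)).
have [z1|n1] := eqVneq (a j1) 0.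
  have [z3|n3] := eqVneq (a (o6 3)) 0.
    have [z4|n4] := eqVneq (a (o6 4)) 0.
      have [] : (1 : k) = 0 /\ (0 : k) = 0 by apply: key; rewrite ?z1 ?z3 ?z4; ring.
      by move/eqP; rewrite oner_eq0.
    have [_ /eqP] : b (o6 4) = 0 /\ - a (o6 4) = 0.
      apply: key; [by rewrite -m2; ring | by rewrite -m3; ring | ring].
    by rewrite oppr_eq0 (negbTE n4).
  have [_ /eqP] : b (o6 3) = 0 /\ - a (o6 3) = 0.
    apply: key; [by rewrite -m1; ring | ring | by rewrite -[RHS]oppr0 -m3; ring].
  by rewrite oppr_eq0 (negbTE n3).
have [_ /eqP] : b j1 = 0 /\ - a j1 = 0.
  apply: key; [ring | by rewrite -[RHS]oppr0 -m1; ring | by rewrite -[RHS]oppr0 -m2; ring].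
by rewrite oppr_eq0 (negbTE n1).
Qed.

Lemma duals_main a b : planar a -> planar b -> indep2 a b ->
  exists U V : vec k, [/\ lf U a = 1, lf U b = 0, lf V a = 0, lf V b = 1 &
    [/\ U (o6 5) = 0, V (o6 5) = 0 &
      forall g : vec k, lf g a = 0 -> lf g b = 0 ->
      (g j1 != 0 \/ g (o6 3) != 0 \/ g (o6 4) != 0) ->
      forall x, planar x -> lf g x = 0 -> x = lc (lf U x) a (lf V x) b]].
Proof.
move=> ha hb hab; have t0 := trip0.
case: (minor_ex ha hb hab) => hm.
- exact: (duals t0 ha hb hm).
- have [U [V [h1 h2 h3 h4 [h5 h6 h7]]]] := duals (tripB t0) ha hb hm.
  exists U, V; split => //; split => // g ga gb gn; apply: h7 => //.
  by case: gn => [|[]]; auto.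
- have [U [V [h1 h2 h3 h4 [h5 h6 h7]]]] := duals (tripB (tripA t0)) ha hb hm.
  exists U, V; split => //; split => // g ga gb gn; apply: h7 => //.
  by case: gn => [|[]]; auto.
Qed.

Lemma choose_w (g p : vec k) : planar p -> (exists j, p j != 0) ->
  (g j1 != 0 \/ g (o6 3) != 0 \/ g (o6 4) != 0) ->
  exists w, [/\ planar w, lf g w = 0 & indep2 p w].
Proof.
move=> hp [j0 pj0] gn.
suff gen : forall r s t : 'I_6, trip r s t -> g r != 0 ->
    exists w, [/\ planar w, lf g w = 0 & indep2 p w].
  have t0 := trip0.
  case: gn => [|[]] gn.
  - exact: (gen _ _ _ t0).
  - exact: (gen _ _ _ (tripA t0)).
  - exact: (gen _ _ _ (tripA (tripB (tripA t0)))).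
move=> r s t htr grn.
have [hr hs ht _ _] := htr.
pose w1 := lc (g s) (e6 r) (- g r) (e6 s).
pose w2 := lc (g t) (e6 r) (- g r) (e6 t).
have pw1 : planar w1 by apply: planar_lc.
have pw2 : planar w2 by apply: planar_lc.
have gw1 : lf g w1 = 0 by rewrite /w1 lf_lc !lf_e; ring.
have gw2 : lf g w2 = 0 by rewrite /w2 lf_lc !lf_e; ring.
case: (classic (indep2 p w1)) => i1; first by exists w1.
case: (classic (indep2 p w2)) => i2; first by exists w2.
exfalso.
have [drs drt dst] : [/\ r != s, r != t & s != t] by case: htr => _ _ _ /and3P[].
have notind w : ~ indep2 p w -> exists al be : k,
    (forall j, al * p j + be * w j = 0) /\ ~ (al = 0 /\ be = 0).
  move=> nw; apply: NNPP => hne; apply: nw => al be hj.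
  apply: NNPP => hn; apply: hne; exists al, be; split => //.
have ev (w : vec k) al be j : (forall j, al * p j + be * w j = 0) -> al * p j + be * w j = 0 by move=> h; apply: h.
have [al [be [h1 n1]]] := notind _ i1.
have [al' [be' [h2 n2]]] := notind _ i2.
have e1t := h1 t; have e1s := h1 s; have e1r := h1 r.
have e2t := h2 t; have e2s := h2 s; have e2r := h2 r.
rewrite /w1 /w2 /lc /e6 !eqxx (negbTE drs) (negbTE drt) (negbTE dst)
  (eq_sym s r) (eq_sym t r) (eq_sym t s) (negbTE drs) (negbTE drt) (negbTE dst) in e1t e1s e1r e2t e2s e2r.
have E1t : al * p t = 0 by rewrite -[RHS]e1t; ring.
have E1s : al * p s - be * g r = 0 by rewrite -[RHS]e1s; ring.
have E1r : al * p r + be * g s = 0 by rewrite -[RHS]e1r; ring.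
have E2t : al' * p t - be' * g r = 0 by rewrite -[RHS]e2t; ring.
have E2s : al' * p s = 0 by rewrite -[RHS]e2s; ring.
have aln : al != 0.
  apply/eqP => a0; apply: n1; split => //; move: E1s; rewrite a0 mul0r sub0r => /eqP.
  by rewrite oppr_eq0 mulf_eq0 (negbTE grn) orbF => /eqP.
have aln' : al' != 0.
  apply/eqP => a0; apply: n2; split => //; move: E2t; rewrite a0 mul0r sub0r => /eqP.
  by rewrite oppr_eq0 mulf_eq0 (negbTE grn) orbF => /eqP.
have pt : p t = 0 by move: E1t => /eqP; rewrite mulf_eq0 (negbTE aln) => /eqP.
have ps : p s = 0 by move: E2s => /eqP; rewrite mulf_eq0 (negbTE aln') => /eqP.
have be0 : be = 0.
  by move: E1s => /eqP; rewrite ps mulr0 sub0r oppr_eq0 mulf_eq0 (negbTE grn) orbF => /eqP.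
have pr : p r = 0.
  by move: E1r => /eqP; rewrite be0 mul0r addr0 mulf_eq0 (negbTE aln) => /eqP.
move/negP: pj0; apply; apply/eqP.
by case: htr => _ _ _ _ /(_ p hp j0) ->; rewrite pr ps pt; ring.
Qed.

End Config.

Lemma cube_not (k : closedFieldType) (l1 l2 m1 m2 e1 e2 : k) : l1 * m2 - l2 * m1 != 0 ->
  ~ (forall u v, (e1 * u + e2 * v) ^+ 3 = (l1 * u + l2 * v) ^+ 2 * (m1 * u + m2 * v)).
Proof.
move=> hD h.
have c1 := h l2 (- l1); rewrite (_ : l1 * l2 + l2 * - l1 = 0) in c1; last by ring.
rewrite expr2 !mul0r in c1; move/eqP: c1; rewrite expf_eq0 /= => /eqP c1.
have c2 := h m2 (- m1); rewrite (_ : m1 * m2 + m2 * - m1 = 0) in c2; last by ring.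
rewrite mulr0 in c2; move/eqP: c2; rewrite expf_eq0 /= => /eqP c2.
have E1 : e1 * (l1 * m2 - l2 * m1) = l1 * (e1 * m2 + e2 * - m1) - m1 * (e1 * l2 + e2 * - l1) by ring.
have E2 : e2 * (l1 * m2 - l2 * m1) = l2 * (e1 * m2 + e2 * - m1) - m2 * (e1 * l2 + e2 * - l1) by ring.
rewrite c1 c2 !mulr0 subrr in E1 E2.
move/eqP: E1; rewrite mulf_eq0 (negbTE hD) orbF => /eqP E1.
move/eqP: E2; rewrite mulf_eq0 (negbTE hD) orbF => /eqP E2.
have c3 := h (l2 + m2) (- (l1 + m1)); rewrite E1 E2 in c3.
have : (l1 * m2 - l2 * m1) ^+ 3 = - ((l1 * (l2 + m2) + l2 * - (l1 + m1)) ^+ 2 * (m1 * (l2 + m2) + m2 * - (l1 + m1))) by ring.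
rewrite -c3 !mul0r addr0 expr0n /= oppr0.
by move/eqP; rewrite expf_eq0 /= (negbTE hD).
Qed.

Section MP.
Variable k : closedFieldType.
Implicit Types (p q : {mpoly k[4]}) (a b : 'I_4 -> k).

Definition Dd p a b : k := \sum_(j < 4) b j * (mderiv j p).@[a].

Lemma DdD p q a b : Dd (p + q) a b = Dd p a b + Dd q a b.
Proof. by rewrite /Dd -big_split; apply: eq_bigr => j _; rewrite mderivD mevalD mulrDr. Qed.

Lemma DdZ c p a b : Dd (c *: p) a b = c * Dd p a b.
Proof. by rewrite /Dd mulr_sumr; apply: eq_bigr => j _; rewrite mderivZ mevalZ mulrCA. Qed.

Lemma Dd0 a b : Dd 0 a b = 0.
Proof. by rewrite /Dd big1 // => j _; rewrite mderiv0 meval0 mulr0. Qed.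

Lemma DdM p q a b : Dd (p * q) a b = Dd p a b * q.@[a] + p.@[a] * Dd q a b.
Proof.
rewrite /Dd mulr_suml mulr_sumr -big_split; apply: eq_bigr => j _.
by rewrite mderivM mevalD !mevalM mulrDr mulrA [b j * (p.@[a] * _)]mulrCA.
Qed.

Lemma DdX i a b : Dd 'X_i a b = b i.
Proof.
rewrite /Dd (bigD1 i) //= big1 => [|j /negbTE ji].
  rewrite mderivX mnm1E eqxx.
  have -> : (U_(i) - U_(i))%MM = 0%MM by apply/mnmP => r; rewrite mnmBE subnn mnm0E.
  by rewrite mpolyX0 scale1r meval1 mulr1 addr0.
by rewrite mderivX mnm1E eq_sym ji scale0r meval0 mulr0.
Qed.

Definition Q3 p := forall a b u v,
  p.@[fun j => u * a j + v * b j] =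
  u ^+ 3 * p.@[a] + u ^+ 2 * v * Dd p a b + u * v ^+ 2 * Dd p b a + v ^+ 3 * p.@[b].

Lemma Q3X i j l : Q3 ('X_i * 'X_j * 'X_l).
Proof.
move=> a b u v; rewrite !DdM !DdX !mevalM !mevalXU; ring.
Qed.

Lemma mon3 (m : 'X_{1..4}) : mdeg m = 3%N ->
  exists i j l, 'X_[m] = 'X_i * 'X_j * 'X_l :> {mpoly k[4]}.
Proof.
move=> hm; have := size_m2s m; rewrite hm.
have := s2mK m.
case: (m2s m) => [|i [|j [|l [|? ?]]]] //= hs _.
exists i, j, l; rewrite -!mpolyXD -hs; congr mpolyX.
by apply/mnmP => r; rewrite !mnmDE !mnm1E /s2m mnmE /= addn0 addnA.
Qed.

Lemma Q3F p : p \is 3.-homog -> Q3 p.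
Proof.
move=> hp; have hm := dhomog_mf hp.
rewrite (mpolyE p).
elim: (msupp p) hm => [|m s IH] hm.
  by move=> a b u v; rewrite big_nil !meval0 !Dd0; ring.
move=> a b u v; rewrite big_cons !mevalD !DdD !mevalZ !DdZ.
have [i [j [l ->]]] := mon3 (hm m (mem_head _ _)).
rewrite Q3X IH; first ring.
by move=> m' hm'; apply: hm; rewrite inE hm' orbT.
Qed.
End MP.

Section G.
Variable k : closedFieldType.
Variable F : {mpoly k[4]}.
Definition o4 (n : nat) : 'I_4 := inord n.

Lemma sum6 (f : 'I_6 -> k) : \sum_j f j =
  f (o6 0) + f (o6 1) + f (o6 2) + f (o6 3) + f (o6 4) + f (o6 5).
Proof.
rewrite !big_ord_recl big_ord0 addr0 !addrA.
by congr (_+_+_+_+_+_); congr f; apply/val_inj; rewrite /= inordK.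
Qed.

Lemma sum4 (f : 'I_4 -> k) : \sum_j f j =
  f (o4 0) + f (o4 1) + f (o4 2) + f (o4 3).
Proof.
rewrite !big_ord_recl big_ord0 addr0 !addrA.
by congr (_+_+_+_); congr f; apply/val_inj; rewrite /= inordK.
Qed.

Lemma restr4E (x : vec k) n : (n < 4)%N -> restr4 x (o4 n) = x (o6 n).
Proof. by move=> h; rewrite /restr4; congr x; apply/val_inj; rewrite /= !inordK // (ltn_trans h). Qed.

Lemma gradE (a : vec k) n : (n < 4)%N -> grad_g F a (o6 n) = - (F^`M(o4 n)).@[restr4 a].
Proof.
move=> h; have h6 : (n < 6)%N by apply: (ltn_trans h).
by rewrite /grad_g /= inordK // h.
Qed.

Lemma G_expr (a b : vec k) : lf (grad_g F a) b =
  3%:R * a (o6 4) ^+ 2 * b (o6 4) - Dd F (restr4 a) (restr4 b).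
Proof.
rewrite /lf /Dd sum6 sum4 !restr4E // (@gradE a 0) // (@gradE a 1) // (@gradE a 2) // (@gradE a 3) //.
rewrite /grad_g /o6 /= !inordK //=; ring.
Qed.
End G.

Section Cubic.
Variable k : closedFieldType.
Hypothesis hchar : [pchar k] =i pred0.
Variable F : {mpoly k[4]}.
Hypothesis hF : F \is 3.-homog.
Implicit Types (a b x y l : vec k) (u v s : k).

Lemma natn0 n : (0 < n)%N -> (n%:R : k) != 0.
Proof. by move=> hn; have /pcharf0P -> := hchar; rewrite -lt0n. Qed.

Lemma g_lc u a v b : gcone F (lc u a v b) =
  u ^+ 3 * gcone F a + u ^+ 2 * v * lf (grad_g F a) b
  + u * v ^+ 2 * lf (grad_g F b) a + v ^+ 3 * gcone F b.
Proof.
rewrite /gcone !G_expr.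
have -> : restr4 (lc u a v b) = (fun j => u * restr4 a j + v * restr4 b j) by [].
rewrite (Q3F hF) /lc; ring.
Qed.

Lemma G_self a : lf (grad_g F a) a = 3%:R * gcone F a.
Proof.
have e1 := g_lc 1 a 1 a; have e2 := g_lc 2%:R a 0 a.
rewrite (_ : lc 2%:R a 0 a = lc 1 a 1 a) in e2; last by apply: vext => j; rewrite /lc; ring.
rewrite e2 in e1; move: e1; set G := lf _ a; set g := gcone F a => e1.
have : (2%:R : k) * (G - 3%:R * g) = 0.
  transitivity ((1 ^+ 3 * g + 1 ^+ 2 * 1 * G + 1 * 1 ^+ 2 * G + 1 ^+ 3 * g)
     - ((2%:R) ^+ 3 * g + (2%:R) ^+ 2 * 0 * G + 2%:R * 0 ^+ 2 * G + 0 ^+ 3 * g)); first by ring.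
  by rewrite e1 subrr.
by move/eqP; rewrite mulf_eq0 (negbTE (natn0 _)) //= subr_eq0 => /eqP.
Qed.
End Cubic.

Section K5.
Variable k : closedFieldType.
Implicit Types (a b x y l : vec k) (u v s : k).

Lemma p0E j : p0 k j = if j == o6 5 then 1 else 0.
Proof. by rewrite /p0 -val_eqE o6v. Qed.

Lemma kill5_p0y s y : y (o6 5) = 0 -> kill5 (lc s (p0 k) 1 y) = y.
Proof.
move=> h; apply: vext => j; rewrite /kill5 /lc p0E.
by case: eqP => [->|_]; rewrite ?h //; ring.
Qed.

Lemma p0_dec x : x = lc (x (o6 5)) (p0 k) 1 (kill5 x).
Proof.
by apply: vext => j; rewrite /kill5 /lc p0E; case: eqP => [->|_]; ring.
Qed.

Lemma kill5_at x j : j != o6 5 -> kill5 x j = x j.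
Proof. by rewrite /kill5 => /negbTE ->. Qed.

Lemma gcone_kill5 (F : {mpoly k[4]}) x : gcone F (kill5 x) = gcone F x.
Proof.
rewrite /gcone kill5_at ?eq_o6 //; congr (_ - _).
congr (F.@[_]); apply: functional_extensionality => j; rewrite /restr4 kill5_at //.
by rewrite -val_eqE o6v //=; apply/eqP => h; have := ltn_ord j; rewrite h.
Qed.

End K5.

Lemma fact_unique (k : closedFieldType) (hchar : [pchar k] =i pred0) (w : bool) (mu g0 ga gb al be : k) :
  mu != 0 ->
  (forall s u v, v * (if w then v else u) * (mu * (s * g0 + u * ga + v * gb)) =
                 v * (if w then v else u) * (al * u + be * v)) ->
  [/\ g0 = 0, mu * ga = al & mu * gb = be].
Proof.
move=> hmu h.
have two : (2%:R : k) != 0 by have /pcharf0P -> := hchar.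
have h1 := h 1 1 1; have h2 := h 0 1 1; have h3 := h 0 1 2%:R.
have om1 : (if w then (1:k) else 1) = 1 by case: (w).
have om2 : (if w then (2%:R:k) else 1) != 0 by case: (w); rewrite ?oner_eq0.
rewrite om1 !mul1r in h1 h2.
have e3 : mu * (ga + 2%:R * gb) = al + 2%:R * be.
  apply: (mulfI (mulf_neq0 two om2)).
  move: h3 om2; set c := (if w then _ else _) => h3 om2.
  transitivity (2%:R * c * (mu * (0 * g0 + 1 * ga + 2%:R * gb))); first by ring.
  by rewrite h3; ring.
have e2 : mu * (ga + gb) = al + be.
  by transitivity (mu * (0 * g0 + ga + gb)); [ring | rewrite h2; ring].
have eg0 : mu * g0 = 0.
  transitivity (mu * (g0 + ga + gb) - mu * (0 * g0 + ga + gb)); first by ring.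
  by rewrite h1 h2 subrr.
have g00 : g0 = 0 by move/eqP: eg0; rewrite mulf_eq0 (negbTE hmu) => /eqP.
have ebe : mu * gb = be.
  transitivity (mu * (ga + 2%:R * gb) - mu * (ga + gb)); first by ring.
  by rewrite e3 e2; ring.
split => //; transitivity (mu * (ga + gb) - mu * gb); first by ring.
by rewrite e2 ebe; ring.
Qed.

Lemma span_eq (k : closedFieldType) (q q' c d : vec k) (A1 B1 A2 B2 : k) : indep2 q q' ->
  (forall j, q j = A1 * c j + B1 * d j) -> (forall j, q' j = A2 * c j + B2 * d j) ->
  forall x, span2 q q' x <-> span2 c d x.
Proof.
move=> hqq hq hq' x; split.
  case=> s [u hx]; exists (s * A1 + u * A2), (s * B1 + u * B2) => j.
  by rewrite hx hq hq'; ring.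
have [d0|dn] := eqVneq (A1 * B2 - A2 * B1) 0.
  have [/eqP B20 /eqP] : B2 = 0 /\ - B1 = 0.
    apply: hqq => j; rewrite hq hq'.
    transitivity ((A1 * B2 - A2 * B1) * c j); first by ring.
    by rewrite d0 mul0r.
  rewrite oppr_eq0 => /eqP B10; move/eqP: B20 => B20.
  have [/eqP A20 /eqP] : A2 = 0 /\ - A1 = 0.
    by apply: hqq => j; rewrite hq hq' B10 B20; ring.
  rewrite oppr_eq0 => /eqP A10; move/eqP: A20 => A20.
  have [] : (1 : k) = 0 /\ (0 : k) = 0.
    by apply: hqq => j; rewrite hq hq' A10 B10; ring.
  by move/eqP; rewrite oner_eq0.
case=> s [u hx].
exists ((s * B2 - u * A2) / (A1 * B2 - A2 * B1)), ((u * A1 - s * B1) / (A1 * B2 - A2 * B1)) => j.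
rewrite hx hq hq'; field; exact: dn.
Qed.

Section Main.
Variable k : closedFieldType.
Hypothesis hchar : [pchar k] =i pred0.
Variable F : {mpoly k[4]}.
Hypothesis hF : F \is 3.-homog.
Variables i j1 : 'I_6.
Hypothesis hij : (i = o6 1 /\ j1 = o6 2) \/ (i = o6 2 /\ j1 = o6 1).
Hypothesis hdr : exists l1 l2 m1 m2 : k, l1 * m2 - l2 * m1 != 0 /\
  forall x : vec k, x (o6 0) = 0 -> x i = 0 ->
    F.@[restr4 x] = (l1 * x j1 + l2 * x (o6 3)) ^+ 2 * (m1 * x j1 + m2 * x (o6 3)).
Variable t : k.
Hypothesis hPhi : forall x : vec k, x (o6 0) = 0 -> x i = 0 -> Phi F t x = gcone F x.
Implicit Types (a b x y l : vec k) (u v s : k).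
Local Notation planar := (planar i).

Lemma nonvanish a b : planar a -> planar b -> indep2 a b ->
  ~ (forall u v, gcone F (lc u a v b) = 0).
Proof.
move=> ha hb hab hz; have [l1 [l2 [m1 [m2 [hD hf]]]]] := hdr.
have hl u v : planar (lc u a v b) by apply: planar_lc.
have gx u v : gcone F (lc u a v b) = (lc u a v b (o6 4)) ^+ 3 -
   (l1 * lc u a v b j1 + l2 * lc u a v b (o6 3)) ^+ 2 * (m1 * lc u a v b j1 + m2 * lc u a v b (o6 3)).
  by rewrite /gcone hf //; case: (hl u v).
have key u v : lc u a v b j1 = 0 -> lc u a v b (o6 3) = 0 -> u = 0 /\ v = 0.
  move=> e1 e3; apply: hab; apply: (zero_planar hij (hl u v)) => //.
  have := hz u v; rewrite gx e1 e3 !mulr0 addr0 expr2 !mul0r subr0 => /eqP.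
  by rewrite expf_eq0 /= => /eqP.
have [m0|mn] := eqVneq (minor j1 (o6 3) a b) 0.
  move: m0; rewrite /minor => m0.
  have [/eqP hb1 /eqP ha1] : b j1 = 0 /\ - a j1 = 0.
    by apply: key; rewrite /lc; [ring | rewrite -[RHS]oppr0 -m0; ring].
  rewrite oppr_eq0 in ha1; move/eqP: ha1 => ha1; move/eqP: hb1 => hb1.
  have [/eqP hb3 /eqP ha3] : b (o6 3) = 0 /\ - a (o6 3) = 0.
    by apply: key; rewrite /lc; [rewrite -m0; ring | ring].
  rewrite oppr_eq0 in ha3; move/eqP: ha3 => ha3; move/eqP: hb3 => hb3.
  have [_ /eqP ha4] : b (o6 4) = 0 /\ - a (o6 4) = 0.
    by apply: key; rewrite /lc ?ha1 ?hb1 ?ha3 ?hb3; ring.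
  rewrite oppr_eq0 in ha4; move/eqP: ha4 => ha4.
  have [] : (1 : k) = 0 /\ (0 : k) = 0.
    apply: hab => j; rewrite (zero_planar hij ha ha1 ha3 ha4); ring.
  by move/eqP; rewrite oner_eq0.
apply: (@cube_not k (l1 * a j1 + l2 * a (o6 3)) (l1 * b j1 + l2 * b (o6 3))
   (m1 * a j1 + m2 * a (o6 3)) (m1 * b j1 + m2 * b (o6 3)) (a (o6 4)) (b (o6 4))).
  rewrite (_ : _ - _ = (l1 * m2 - l2 * m1) * minor j1 (o6 3) a b); first by rewrite mulf_neq0.
  by rewrite /minor; ring.
move=> u v; have := hz u v; rewrite gx => /eqP; rewrite subr_eq0 => /eqP h.
rewrite /lc in h; transitivity ((u * a (o6 4) + v * b (o6 4)) ^+ 3); first by ring.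
by rewrite h; ring.
Qed.

Definition om (w : bool) u v := if w then v else u.

Definition Setup (p1 p2 b U V : vec k) (w : bool) (al be : k) :=
  [/\ [/\ planar p1, planar b, indep2 p1 b &
        (lf U p1 = 1 /\ lf U b = 0 /\ lf V p1 = 0 /\ lf V b = 1)],
      [/\ U (o6 5) = 0, V (o6 5) = 0,
          (forall x, lineL F i p1 p2 x -> x = lc (lf U x) p1 (lf V x) b) &
          (forall u v, lineL F i p1 p2 (lc u p1 v b))],
      (forall x, planeP F i p1 p2 x -> lineL F i p1 p2 (kill5 x)) /\
          (forall s y, lineL F i p1 p2 y -> planeP F i p1 p2 (lc s (p0 k) 1 y)) &
      [/\ (forall u v, gcone F (lc u p1 v b) = v * om w u v * (al * u + be * v)),
          (al != 0 \/ be != 0),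
          lineL F i p1 p2 p2, nonzero p2 & lf (if w then V else U) p2 = 0] ].

Section WithSetup.
Variables (p1 p2 b U V : vec k) (w : bool) (al be : k).
Hypothesis hs : Setup p1 p2 b U V w al be.
Local Notation S := (lineL F i p1 p2).
Local Notation P := (planeP F i p1 p2).

Lemma S_dec x : S x -> x = lc (lf U x) p1 (lf V x) b.
Proof. by case: hs => _ [_ _ h _] _ _; apply: h. Qed.

Lemma S_in u v : S (lc u p1 v b).
Proof. by case: hs => _ [_ _ _ h] _ _; apply: h. Qed.

Lemma S_planar x : S x -> planar x.
Proof.
move/S_dec => ->; case: hs => [[h1 h2 _ _] _ _ _]; exact: planar_lc.
Qed.

Lemma S_lc x y u v : S x -> S y -> S (lc u x v y).
Proof.
move=> /S_dec hx /S_dec hy.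
have -> : lc u x v y = lc (u * lf U x + v * lf U y) p1 (u * lf V x + v * lf V y) b.
  by apply: vext => j; rewrite /lc {1}hx {1}hy /lc; ring.
exact: S_in.
Qed.

Lemma S_span1 x q : S q -> span1 q x -> S x.
Proof.
move=> hq [c hc]; have -> : x = lc c q 0 q by apply: vext => j; rewrite hc /lc; ring.
exact: S_lc.
Qed.

Lemma S_p1 : S p1.
Proof. by have := S_in 1 0; congr S; apply: vext => j; rewrite /lc; ring. Qed.

Lemma S_b : S b.
Proof. by have := S_in 0 1; congr S; apply: vext => j; rewrite /lc; ring. Qed.

Lemma lfU1 : lf U p1 = 1. Proof. by case: hs => [[_ _ _ [? _]]] _ _ _. Qed.
Lemma lfUb : lf U b = 0. Proof. by case: hs => [[_ _ _ [_ [? _]]]] _ _ _. Qed.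
Lemma lfV1 : lf V p1 = 0. Proof. by case: hs => [[_ _ _ [_ [_ [? _]]]]] _ _ _. Qed.
Lemma lfVb : lf V b = 1. Proof. by case: hs => [[_ _ _ [_ [_ [_ ?]]]]] _ _ _. Qed.

Definition p3c := lc be p1 (- al) b.

Lemma part1 : third_point F i p1 p2 p3c.
Proof.
have [[hp1 hb hind _] _ _ [hg hab hp2 nzp2 hW]] := hs.
split.
  case: (classic (exists j, p3c j != 0)) => // hn; exfalso.
  have [/eqP b0 /eqP] : be = 0 /\ - al = 0.
    apply: hind => j; apply/eqP/negPn/negP => hj; apply: hn; exists j; exact: hj.
  by rewrite oppr_eq0 => a0; case: hab => /negP; rewrite ?a0 ?b0.
exists V, (if w then V else U), (lc al U be V); split.
- by move=> x /S_dec hx; rewrite {1}hx hg lf_lcl /om; case: (w).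
- split; first by move=> x hx; have hx' := S_span1 S_p1 hx; split => //;
    case: hx => c hc; rewrite (_ : x = lc c p1 0 p1) ?lf_lc ?lfV1; [ring | apply: vext => j; rewrite hc /lc; ring].
  by exists b; split; [exact: S_b | rewrite lfVb oner_eq0].
- split. move=> x hx; have hx' := S_span1 hp2 hx; split => //.
    case: hx => c hc; rewrite (_ : x = lc c p2 0 p2).
      by rewrite lf_lc hW; ring.
    by apply: vext => j; rewrite hc /lc; ring.
  by case: (w); [exists b; split; [exact: S_b | rewrite lfVb oner_eq0] | exists p1; split; [exact: S_p1 | rewrite lfU1 oner_eq0]].
- split. move=> x hx; have hx' := S_span1 (S_in _ _) hx; split => //.
    case: hx => c hc; rewrite (_ : x = lc c p3c 0 p3c).
      by rewrite !lf_lcl /p3c !lf_lc lfU1 lfUb lfV1 lfVb; ring.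
    by apply: vext => j; rewrite hc /lc; ring.
  case: hab => h.
    by exists p1; split; [exact: S_p1 | rewrite lf_lcl lfU1 lfV1 mulr1 mulr0 addr0].
  by exists b; split; [exact: S_b | rewrite lf_lcl lfUb lfVb mulr1 mulr0 add0r].
Qed.

Lemma P_kill x : P x -> S (kill5 x).
Proof. by case: hs => _ _ [h _] _; apply: h. Qed.

Lemma P_in s y : S y -> P (lc s (p0 k) 1 y).
Proof. by case: hs => _ _ [_ h] _; apply: h. Qed.

Lemma Phi_P x : P x -> Phi F t x = gcone F (kill5 x).
Proof.
move=> /P_kill /S_planar [h0 hi _]; rewrite gcone_kill5 hPhi //.
  by rewrite -h0 kill5_at ?eq_o6.
rewrite -hi kill5_at //.
by case: hij => [[-> _]|[-> _]]; rewrite eq_o6.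
Qed.

Lemma lift_div q l : divcomp S (span1 q) l -> divcomp P (span2 (p0 k) q) (kill5 l).
Proof.
case=> h1 [y [hy ly]].
have [Sq lq] : S q /\ lf l q = 0 by apply: h1; exists 1 => j; ring.
have [_ _ q5] := S_planar Sq.
split.
  move=> x [s0 [u hx]].
  have ex : x = lc s0 (p0 k) 1 (lc u q 0 q) by apply: vext => j; rewrite hx /lc; ring.
  split; first by rewrite ex; apply: P_in; apply: S_lc.
  rewrite -lf_kill5 ex kill5_p0y; last by rewrite /lc q5; ring.
  by rewrite lf_lc lq; ring.
exists y; split.
  by have := P_in 0 hy; congr P; apply: vext => j; rewrite /lc; ring.
have [_ _ y5] := S_planar hy.
by rewrite -lf_kill5 kill5_id.
Qed.

Lemma part2 p3 : third_point F i p1 p2 p3 -> residual_line F t i p1 p2 (p0 k) p3 /\ Cpt F i p3.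
Proof.
case=> nz3 [l1 [l2 [l3 [hfac d1 d2 d3]]]].
have [S3 l3p3] : S p3 /\ lf l3 p3 = 0 by case: d3 => h _; apply: h; exists 1 => j; ring.
have g3 : gcone F p3 = 0 by rewrite hfac // l3p3 mulr0.
have [h0 hi h5] := S_planar S3.
split; last by split.
split.
  move=> a0 b0 hj; have e5 := hj (o6 5); rewrite p0E eqxx h5 mulr1 mulr0 addr0 in e5.
  split => //; case: nz3 => j nj; have := hj j; rewrite e5 mul0r add0r => /eqP.
  by rewrite mulf_eq0 (negbTE nj) orbF => /eqP.
exists (kill5 l1), (kill5 l2), (kill5 l3); split.
- move=> x hx; rewrite Phi_P // hfac; last exact: P_kill.
  by rewrite !lf_kill5.
- exact: lift_div.
- exact: lift_div.
- exact: lift_div.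
Qed.

Lemma lfU5 x : lf U (kill5 x) = lf U x.
Proof. by rewrite lf_kill5 kill5_id //; case: hs => _ []. Qed.
Lemma lfV5 x : lf V (kill5 x) = lf V x.
Proof. by rewrite lf_kill5 kill5_id //; case: hs => _ []. Qed.

Lemma P_coord x : P x -> x = lc (x (o6 5)) (p0 k) 1 (lc (lf U x) p1 (lf V x) b).
Proof.
move=> hx; rewrite {1}(p0_dec x); congr lc.
by rewrite -lfU5 -lfV5; apply: S_dec; apply: P_kill.
Qed.

Lemma P_pt s u v : P (lc s (p0 k) 1 (lc u p1 v b)).
Proof. by apply: P_in; apply: S_in. Qed.

Lemma lf_pt m s u v : lf m (lc s (p0 k) 1 (lc u p1 v b)) = s * m (o6 5) + u * lf m p1 + v * lf m b.
Proof. by rewrite !lf_lc lf_p0; ring. Qed.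

Lemma b5 : b (o6 5) = 0. Proof. by case: hs => [[_ [_ _ ->] _ _]] _ _ _. Qed.
Lemma p15 : p1 (o6 5) = 0. Proof. by case: hs => [[[_ _ ->] _ _ _]] _ _ _. Qed.

Lemma core m1 m2 m3 : (forall x, P x -> Phi F t x = lf m1 x * lf m2 x * lf m3 x) ->
  divcomp P (span2 (p0 k) p1) m1 -> divcomp P (span2 (p0 k) p2) m2 ->
  exists mu, mu != 0 /\ forall x, P x -> mu * lf m3 x = al * lf U x + be * lf V x.
Proof.
move=> hfac [d1 [y1 [Py1 ny1]]] [d2 [y2 [Py2 ny2]]].
have [[_ m1p0] [_ m1p1]] : (P (p0 k) /\ lf m1 (p0 k) = 0) /\ (P p1 /\ lf m1 p1 = 0).
  by split; apply: d1; [exists 1, 0 | exists 0, 1] => j; ring.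
have [[_ m2p0] [_ m2p2]] : (P (p0 k) /\ lf m2 (p0 k) = 0) /\ (P p2 /\ lf m2 p2 = 0).
  by split; apply: d2; [exists 1, 0 | exists 0, 1] => j; ring.
rewrite lf_p0 in m1p0; rewrite lf_p0 in m2p0.
have m1pt s u v : lf m1 (lc s (p0 k) 1 (lc u p1 v b)) = v * lf m1 b.
  by rewrite lf_pt m1p0 m1p1; ring.
have m1b : lf m1 b != 0.
  by move: ny1; rewrite (P_coord Py1) m1pt; apply: contraNneq => ->; rewrite mulr0.
have [[hp1 hb hind _] _ _ [hg hab hp2 nzp2 hW]] := hs.
have hp2d := S_dec hp2.
have [mu2 [hmu2 m2pt]] : exists mu2, mu2 != 0 /\
    forall s u v, lf m2 (lc s (p0 k) 1 (lc u p1 v b)) = (if w then v else u) * mu2.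
  have nz0 c1 c2 : p2 = lc c1 p1 c2 b -> c1 != 0 \/ c2 != 0.
    move=> e; case: nzp2 => j; rewrite e /lc; case: (eqVneq c1 0) => [->|]; last by left.
    case: (eqVneq c2 0) => [->|]; last by right.
    by rewrite !mul0r addr0 eqxx.
  have [wt|wf] : w = true \/ w = false by case: (w); auto.
  - rewrite wt in hW *; rewrite hW in hp2d.
    have := m2p2; rewrite hp2d lf_lc mul0r addr0 => /eqP; rewrite mulf_eq0 => /orP [/eqP c0|/eqP m2p1].
      by have := nz0 _ _ hp2d; rewrite c0 eqxx; case.
    exists (lf m2 b); split; last by move=> s0 u v; rewrite lf_pt m2p0 m2p1; ring.
    by move: ny2; rewrite (P_coord Py2) lf_pt m2p0 m2p1; apply: contraNneq => ->; apply/eqP; ring.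
  - rewrite wf in hW *; rewrite hW in hp2d.
    have := m2p2; rewrite hp2d lf_lc mul0r add0r => /eqP; rewrite mulf_eq0 => /orP [/eqP c0|/eqP m2b].
      by have := nz0 _ _ hp2d; rewrite c0 eqxx; case.
    exists (lf m2 p1); split; last by move=> s0 u v; rewrite lf_pt m2p0 m2b; ring.
    by move: ny2; rewrite (P_coord Py2) lf_pt m2p0 m2b; apply: contraNneq => ->; apply/eqP; ring.
have fu := @fact_unique k hchar w (lf m1 b * mu2) (m3 (o6 5)) (lf m3 p1) (lf m3 b) al be (mulf_neq0 m1b hmu2).
suff H : forall s u v, v * (if w then v else u) * ((lf m1 b * mu2) * (s * m3 (o6 5) + u * lf m3 p1 + v * lf m3 b)) =
                 v * (if w then v else u) * (al * u + be * v).
  have [g0 ga gb] := fu H.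
  exists (lf m1 b * mu2); split; first exact: mulf_neq0.
  by move=> x hx; rewrite {1}(P_coord hx) lf_pt g0 -ga -gb; ring.
move=> s0 u v.
have := hfac _ (P_pt s0 u v); rewrite m1pt m2pt lf_pt (Phi_P (P_pt _ _ _)) kill5_p0y; last first.
  by rewrite /lc p15 b5; ring.
move=> h; transitivity (v * lf m1 b * ((if w then v else u) * mu2) *
  (s0 * m3 (o6 5) + u * lf m3 p1 + v * lf m3 b)); first by ring.
by rewrite -h hg /om.
Qed.

Lemma kernel_line x : P x -> al * lf U x + be * lf V x = 0 ->
  exists rho, forall j, x j = x (o6 5) * p0 k j + rho * p3c j.
Proof.
move=> hx he; have hc := P_coord hx.
have [_ _ _ [_ hab _ _ _]] := hs.
have [a0|an] := eqVneq al 0.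
  have bn : be != 0 by case: hab => //; rewrite a0 eqxx.
  rewrite a0 mul0r add0r in he; move/eqP: he; rewrite mulf_eq0 (negbTE bn) /= => /eqP v0.
  exists (lf U x / be) => j; rewrite {1}hc /p3c /lc v0 a0; field; exact: bn.
exists (- lf V x / al) => j.
have eU : lf U x = - (be * lf V x) / al.
  apply: (mulfI an); transitivity (al * lf U x + be * lf V x - be * lf V x); first by ring.
  by rewrite he; field.
by rewrite {1}hc /p3c /lc eU; field.
Qed.

Lemma part3 q q' p3 : residual_line F t i p1 p2 q q' -> third_point F i p1 p2 p3 ->
  forall x, span2 q q' x <-> span2 (p0 k) p3 x.
Proof.
case=> hqq [m1 [m2 [m3 [hfac d1 d2 d3]]]] h3.
have [mu [hmu hm3]] := core hfac d1 d2.
have [[_ [n1 [n2 [n3 [hfac' e1 e2 e3]]]]] [nz3 _ _ p35 _]] := part2 h3.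
have [mu' [hmu' hn3]] := core hfac' e1 e2.
have [P3 n3p3] : P p3 /\ lf n3 p3 = 0 by case: e3 => h _; apply: h; exists 0, 1 => j; ring.
have kl z m mu0 : mu0 != 0 -> P z -> lf m z = 0 -> (forall x, P x -> mu0 * lf m x = al * lf U x + be * lf V x) ->
    exists rho, forall j, z j = z (o6 5) * p0 k j + rho * p3c j.
  by move=> hmu0 hz mz hm; apply: kernel_line => //; rewrite -hm // mz mulr0.
have [r3 hr3] := kl _ _ _ hmu' P3 n3p3 hn3.
rewrite p35 in hr3.
have r3n : r3 != 0.
  apply/eqP => r0; case: nz3 => j; rewrite hr3 r0; apply/negP; rewrite negbK; apply/eqP; ring.
have [[Pq mq] [Pq' mq']] : (P q /\ lf m3 q = 0) /\ (P q' /\ lf m3 q' = 0).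
  by case: d3 => h _; split; apply: h; [exists 1, 0 | exists 0, 1] => j; ring.
have [rq hrq] := kl _ _ _ hmu Pq mq hm3.
have [rq' hrq'] := kl _ _ _ hmu Pq' mq' hm3.
apply: (span_eq (A1 := q (o6 5)) (B1 := rq / r3) (A2 := q' (o6 5)) (B2 := rq' / r3) hqq).
- by move=> j; rewrite {1}hrq hr3; field.
- by move=> j; rewrite {1}hrq' hr3; field.
Qed.

End WithSetup.

Lemma Cpt_planar (p : vec k) : Cpt F i p -> planar p.
Proof. by case=> _ h0 hi h5 _; split. Qed.

Lemma grad5 a : grad_g F a (o6 5) = 0.
Proof. by rewrite /grad_g o6v. Qed.

Lemma indep_of_nproj (p q : vec k) : nonzero p -> nonzero q -> ~ proj_eq p q -> indep2 p q.
Proof.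
move=> [j0 pj0] [j1' qj1] np a0 b0 h.
have [bz|bn] := eqVneq b0 0.
  split => //; have := h j0; rewrite bz mul0r addr0 => /eqP; rewrite mulf_eq0 (negbTE pj0) orbF.
  by move/eqP.
exfalso; apply: np; exists (- a0 / b0); split.
  apply/eqP => c0; move/negP: qj1; apply; apply/eqP.
  have := h j1'; move=> e; have : b0 * q j1' = - (a0 * p j1') by rewrite -[RHS]add0r -e; ring.
  move=> e2; have : q j1' = (- a0 / b0) * p j1' by apply: (mulfI bn); rewrite e2; field.
  by rewrite c0 mul0r.
move=> j; apply: (mulfI bn); have e := h j.
transitivity (a0 * p j + b0 * q j - a0 * p j); first by ring.
by rewrite e; field.
Qed.

Lemma setup_nproj (p1 p2 : vec k) : Cpt F i p1 -> Cpt F i p2 -> ~ proj_eq p1 p2 ->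
  exists U V al be, Setup p1 p2 p2 U V false al be.
Proof.
move=> c1 c2 np.
have hp1 := Cpt_planar c1; have hp2 := Cpt_planar c2.
have hind : indep2 p1 p2 by apply: indep_of_nproj => //; [case: c1 | case: c2].
have [U [V [u1 u2 v1 v2 [U5 V5 _]]]] := duals_main hij hp1 hp2 hind.
have Sx x : lineL F i p1 p2 x <-> span2 p1 p2 x.
  by split; [case=> _ h; apply: h | move=> h; split => // /np].
have Px x : planeP F i p1 p2 x <-> span3 (p0 k) p1 p2 x.
  by split; [case=> _ h; apply: h | move=> h; split => // /np].
have g1 : gcone F p1 = 0 by case: c1.
have g2 : gcone F p2 = 0 by case: c2.
exists U, V, (lf (grad_g F p1) p2), (lf (grad_g F p2) p1).
split.
- by split => //.
- split => //.
  + move=> x /Sx [s0 [u hx]]; have -> : x = lc s0 p1 u p2 by apply: vext.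
    by rewrite !lf_lc u1 u2 v1 v2; apply: vext => j; rewrite /lc; congr (_ + _); ring.
  + by move=> u v; apply/Sx; exists u, v.
- split.
  + move=> x /Px [s0 [u [v hx]]]; apply/Sx; exists u, v => j.
    rewrite /kill5 hx p0E; case: eqP => [->|_]; last by ring.
    by case: hp1 => _ _ ->; case: hp2 => _ _ ->; ring.
  + move=> s0 y /Sx [u [v hy]]; apply/Px; exists s0, u, v => j; rewrite /lc hy; ring.
- split.
  + by move=> u v; rewrite (g_lc hF) g1 g2 /om; ring.
  + case: (eqVneq (lf (grad_g F p1) p2) 0) => [a0|]; last by left.
    case: (eqVneq (lf (grad_g F p2) p1) 0) => [b0|]; last by right.
    exfalso; apply: (nonvanish hp1 hp2 hind) => u v.
    by rewrite (g_lc hF) g1 g2 a0 b0; ring.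
  + by apply/Sx; exists 0, 1 => j; ring.
  + by case: c2.
  + by [].
Qed.

Lemma setup_proj (p1 p2 : vec k) : Cpt F i p1 -> Cpt F i p2 -> proj_eq p1 p2 ->
  (exists j : 'I_6, [/\ j != o6 0, j != i & grad_g F p1 j != 0]) ->
  exists b U V al be, Setup p1 p2 b U V true al be.
Proof.
move=> c1 c2 pe [j0 [j00 j0i gj0]].
have hp1 := Cpt_planar c1; have hp2 := Cpt_planar c2.
set ga := grad_g F p1.
have g1 : gcone F p1 = 0 by case: c1.
have gp1 : lf ga p1 = 0 by rewrite /ga (G_self hchar hF) g1 mulr0.
have ga5 : ga (o6 5) = 0 by rewrite /ga grad5.
have gn : ga j1 != 0 \/ ga (o6 3) != 0 \/ ga (o6 4) != 0.
  case: (cover6 j0) => [e|[e|[e|[e|[e|e]]]]]; subst j0.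
  - by rewrite eqxx in j00.
  - by case: hij => [[hi hj]|[hi hj]]; [rewrite hi eqxx in j0i | left; rewrite hj].
  - by case: hij => [[hi hj]|[hi hj]]; [left; rewrite hj | rewrite hi eqxx in j0i].
  - by right; left.
  - by right; right.
  - by rewrite grad5 eqxx in gj0.
have nz1 : nonzero p1 by case: c1.
have [w [pw gw iw]] := choose_w hij hp1 nz1 gn.
have [U [V [u1 u2 v1 v2 [U5 V5 hspan]]]] := duals_main hij hp1 pw iw.
have Sx x : lineL F i p1 p2 x <-> tangent_line F i p1 x.
  by split; [case=> h _; apply: h | move=> h; split => // /(_ pe)].
have Px x : planeP F i p1 p2 x <-> tangent_plane F i p1 x.
  by split; [case=> h _; apply: h | move=> h; split => // /(_ pe)].
have tl x : tangent_line F i p1 x <-> planar x /\ lf ga x = 0.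
  by split; [case=> a b c d; split => // | case=> [[a b c] d]; split].
have [c [cn hc]] := pe.
have ep2 : p2 = lc c p1 0 p1 by apply: vext => j; rewrite hc /lc; ring.
exists w, U, V, (lf (grad_g F w) p1), (gcone F w).
split.
- by split => //.
- split => //.
  + move=> x /Sx /tl [hx gx]; apply: (hspan ga) => //.
  + move=> u v; apply/Sx/tl; split; first exact: planar_lc.
    by rewrite lf_lc gp1 gw; ring.
- split.
  + move=> x /Px [h0 hi gx]; apply/Sx/tl; split.
      split.
      * by rewrite kill5_at ?eq_o6.
      * by rewrite kill5_at //; case: hij => [[-> _]|[-> _]]; rewrite eq_o6.
      * by rewrite /kill5 eqxx.
    by rewrite lf_kill5 kill5_id.
  + move=> s0 y /Sx /tl [[y0 yi y5] gy]; apply/Px; split.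
    * by rewrite /lc p0E eq_o6 //= y0; ring.
    * rewrite /lc p0E yi; case: hij => [[-> _]|[-> _]]; rewrite eq_o6 //=; ring.
    * by rewrite lf_lc lf_p0 grad5 gy; ring.
- split.
  + by move=> u v; rewrite (g_lc hF) g1 /om -/ga gw; ring.
  + case: (eqVneq (lf (grad_g F w) p1) 0) => [a0|]; last by left.
    case: (eqVneq (gcone F w) 0) => [b0|]; last by right.
    exfalso; apply: (nonvanish hp1 pw iw) => u v.
    by rewrite (g_lc hF) g1 -/ga gw a0 b0; ring.
  + apply/Sx/tl; split => //; by rewrite ep2 lf_lc gp1; ring.
  + by case: c2.
  + by rewrite ep2 lf_lc v1; ring.
Qed.

Lemma conclusion (p1 p2 : vec k) : Cpt F i p1 -> Cpt F i p2 ->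
  (proj_eq p1 p2 -> exists j : 'I_6, [/\ j != o6 0, j != i & grad_g F p1 j != 0]) ->
  [/\ exists p3, third_point F i p1 p2 p3,
      forall p3, third_point F i p1 p2 p3 ->
        residual_line F t i p1 p2 (@p0 k) p3 /\ Cpt F i p3,
      forall q q' p3, residual_line F t i p1 p2 q q' ->
        third_point F i p1 p2 p3 ->
        forall x, span2 q q' x <-> span2 (@p0 k) p3 x
    & forall q q', residual_line F t i p1 p2 q q' ->
        exists p, Cpt F i p /\ forall x, span2 q q' x <-> span2 (@p0 k) p x].
Proof.
move=> c1 c2 hsm.
have [b [U [V [w [al [be hs]]]]]] : exists b U V w al be, Setup p1 p2 b U V w al be.
  case: (classic (proj_eq p1 p2)) => pe.
  - have [b [U [V [al [be h]]]]] := setup_proj c1 c2 pe (hsm pe).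
    by exists b, U, V, true, al, be.
  - have [U [V [al [be h]]]] := setup_nproj c1 c2 pe.
    by exists p2, U, V, false, al, be.
split.
- by eexists; apply: (part1 hs).
- by move=> p3 h3; apply: (part2 hs h3).
- by move=> q q' p3 hr h3; apply: (part3 hs hr h3).
- move=> q q' hr; eexists; split; first exact: (part2 hs (part1 hs)).2.
  exact: (part3 hs hr (part1 hs)).
Qed.

End Main.

Lemma cover4 (j : 'I_4) : j = o4 0 \/ j = o4 1 \/ j = o4 2 \/ j = o4 3.
Proof.
have E n (hn : (n < 4)%N) : Ordinal hn = o4 n by apply/val_inj; rewrite /= inordK.
case: j => [[|[|[|[|?]]]] hj] //; rewrite E.
- by left.
- by right; left.
- by right; right; left.
- by right; right; right.
Qed.

Lemma vec4E (k : closedFieldType) (a b c d : k) n : (n < 4)%N ->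
  vec4 a b c d (o4 n) = nth 0 [:: a; b; c; d] n.
Proof. by move=> h; rewrite /vec4 /o4 inordK. Qed.

Unset Implicit Arguments.

Theorem lemma5p5 (k : closedFieldType) (hchar : [pchar k] =i pred0)
  (F : {mpoly k[4]}) (t : k) (hU : U0 F)
  (i : 'I_6) (hi : val i = 1%N \/ val i = 2%N)
  (p1 p2 : vec k) (hp1 : Cpt F i p1) (hp2 : Cpt F i p2)
  (* when p1 = p2 the tangent plane of the cone along p0p1 must exist *)
  (hsm : proj_eq p1 p2 ->
         exists j : 'I_6, [/\ j != o6 0, j != i & grad_g F p1 j != 0]) :
  [/\ (* the third intersection point p3 exists *)
      exists p3, third_point F i p1 p2 p3,
      (* Y cap P = p0p1 + p0p2 + p0p3 *)
      forall p3, third_point F i p1 p2 p3 ->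
        residual_line F t i p1 p2 (@p0 k) p3 /\ Cpt F i p3,
      (* any residual line l_{p1p2} equals p0p3 *)
      forall q q' p3, residual_line F t i p1 p2 q q' ->
        third_point F i p1 p2 p3 ->
        forall x, span2 q q' x <-> span2 (@p0 k) p3 x
    & (* in particular l_{p1p2} lies in Gamma_i *)
      forall q q', residual_line F t i p1 p2 q q' ->
        exists p, Cpt F i p /\ forall x, span2 q q' x <-> span2 (@p0 k) p x].
Proof.
have [hF _ _ d1 d2] := hU.
have hPhi j (hj : j = 1%N \/ j = 2%N) : forall x : vec k, x (o6 0) = 0 -> x (o6 j) = 0 -> Phi F t x = gcone F x.
  move=> x x0 xi; rewrite /Phi /gcone x0.
  by case: hj => ej; rewrite ej in xi; rewrite xi; ring.
have hr x : x (o6 0) = 0 -> restr4 x = vec4 0 (x (o6 1)) (x (o6 2)) (x (o6 3)).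
  move=> x0; apply: functional_extensionality => j.
  by case: (cover4 j) => [->|[->|[->|->]]]; rewrite restr4E // vec4E.
case: hi => e.
- have ei : i = o6 1 by apply/val_inj; rewrite o6v.
  subst i.
  apply: (@conclusion k hchar F hF (o6 1) (o6 2) _ _ t (hPhi 1%N (or_introl erefl)) p1 p2 hp1 hp2 hsm).
    by left.
  have [l1 [l2 [m1 [m2 [hD hf]]]]] := d1.
  exists l1, l2, m1, m2; split => // x x0 xi.
  by rewrite hr // xi hf.
- have ei : i = o6 2 by apply/val_inj; rewrite o6v.
  subst i.
  apply: (@conclusion k hchar F hF (o6 2) (o6 1) _ _ t (hPhi 2%N (or_intror erefl)) p1 p2 hp1 hp2 hsm).
    by right.
  have [l1 [l2 [m1 [m2 [hD hf]]]]] := d2.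
  exists l1, l2, m1, m2; split => // x x0 xi.
  by rewrite hr // xi hf.
Qed.
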